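(* For all positive integers $m$ and all $r = 0,1,\ldots,m-1$, the number of rows of $H(r,m)$ is $$g(r,m) = \sum_{i=0}^{r} \binom{m-r-1+i}{i} 2^i.$$
   Context: All matrices are binary. The matrices $G(r,m)$, $0\le r\le m$, are defined recursively by $G(m,m) = I_{2^m}$, $G(0,m) = (11\cdots1)$ (length $2^m$), and for $0<r<m$, $G(r,m) = \begin{pmatrix} G(r,m-1) & G(r,m-1) \\ \mathbf{0} & G(r-1,m-1)\end{pmatrix}$ (so $G(m-1,m)$ has $2^m-1$ rows). The matrices $H(r,m)$ are defined by: for all $m \ge 0$, $H(0,m) = (11\cdots1)$ (length $2^m$), $H(m-1,m) = G(m-1,m)$, $H(m,m) = I_{2^m}$; and for all positive integers $m$ and $r = 1,\ldots,m-2$, $$H(r,m) = \begin{pmatrix} H(r,m-1) & H(r,m-1) \\ \mathbf{0} & H(r-1,m-1) \\ H(r-1,m-1) & \mathbf{0}\end{pmatrix}.$$ *)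

(* Defs.v *)
(* Binary matrices are represented as lists of rows,
   each row a list of booleans; the number of rows is the list size. *)
From mathcomp Require Import all_boot.
Set Implicit Arguments. Unset Strict Implicit. Unset Printing Implicit Defensive.

Definition bmatrix := seq (seq bool).

Definition idm (n : nat) : bmatrix :=
  [seq [seq i == j | j <- iota 0 n] | i <- iota 0 n].

Definition onesm (n : nat) : bmatrix := [:: nseq n true].

Definition blockAA_0B (w : nat) (A B : bmatrix) : bmatrix :=
  [seq x ++ x | x <- A] ++ [seq nseq w false ++ y | y <- B].

(* G(r,m); only meaningful for r <= m *)
Fixpoint G (r m : nat) : bmatrix :=
  match m with
  | 0 => idm 1
  | m'.+1 =>
      if r == 0 then onesm (2 ^ m)
      else if m <= r then idm (2 ^ m)
      else blockAA_0B (2 ^ m') (G r m') (G r.-1 m')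
  end.

(* H(r,m); only meaningful for r <= m *)
Fixpoint H (r m : nat) : bmatrix :=
  match m with
  | 0 => onesm 1
  | m'.+1 =>
      if r == 0 then onesm (2 ^ m)
      else if r == m' then G r m
      else if m <= r then idm (2 ^ m)
      else blockAA_0B (2 ^ m') (H r m') (H r.-1 m')
             ++ [seq y ++ nseq (2 ^ m') false | y <- H r.-1 m']
  end.

Example ex1 : size (H 1 3) = 5. Proof. by []. Qed.
Example ex2 : size (H 2 5) = \sum_(i < 3) 'C(5 - 2 - 1 + i, i) * 2 ^ i. Proof. by rewrite !big_ord_recr big_ord0. Qed.

(* Main.v *)
Require Import Defs.
From mathcomp Require Import all_boot.
From mathcomp Require Import zify.

Lemma Gs r m : 0 < r -> r < m.+1 -> G r m.+1 = blockAA_0B (2 ^ m) (G r m) (G r.-1 m).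
Proof. case: r => // r _ h. rewrite [LHS]/=. rewrite ifF //. lia. Qed.
Lemma Hs r m : 0 < r -> r < m -> H r m.+1 = blockAA_0B (2 ^ m) (H r m) (H r.-1 m)
             ++ [seq y ++ nseq (2 ^ m) false | y <- H r.-1 m].
Proof. case: r => // r _ h. rewrite [LHS]/=. rewrite ifF; last by lia. rewrite ifF //. lia. Qed.

Definition g r m := \sum_(i < r.+1) 'C(m - r - 1 + i, i) * 2 ^ i.

Lemma sizeGtop m : (size (G m m.+1)).+1 = 2 ^ m.+1.
Proof.
elim: m => [|m IH]; first by [].
rewrite Gs // /blockAA_0B size_cat !size_map.
have -> : size (G m.+1 m.+1) = 2 ^ m.+1.
  by rewrite [G _ _]/= leqnn size_map size_iota.
rewrite -addnS IH !expnS; lia.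
Qed.

Lemma sum_pow2 n : (\sum_(i < n) 2 ^ i).+1 = 2 ^ n.
Proof.
elim: n => [|n IH]; first by rewrite big_ord0.
rewrite big_ord_recr /= -addSn IH expnS; lia.
Qed.

Lemma g_top m : (g m m.+1).+1 = 2 ^ m.+1.
Proof.
rewrite /g -sum_pow2; congr _.+1; apply: eq_bigr => i _.
rewrite subSn // subnn subn1 /=; have -> : forall k, 0 + k = k by []. by rewrite binn mul1n.
Qed.

Lemma g_rec s m : s.+1 < m -> g s.+1 m.+1 = g s.+1 m + 2 * g s m.
Proof.
move=> hs; rewrite /g big_ord_recl [in X in _ = X + _]big_ord_recl.
rewrite !bin0 big_distrr -addnA; congr (_ + _).
rewrite -big_split; apply: eq_bigr => i _ /=.
rewrite /bump /= add1n.
have -> : m.+1 - s.+1 - 1 + i.+1 = (m - s - 1 + i).+1 by lia.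
have -> : m - s.+1 - 1 + i.+1 = m - s - 1 + i by lia.
rewrite binS mulnDl expnS; congr (_ + _).
by rewrite mulnCA.
Qed.

Theorem lemma13 (m r : nat) :
  0 < m -> r < m ->
  size (H r m) = \sum_(i < r.+1) 'C(m - r - 1 + i, i) * 2 ^ i.
Proof.
rewrite -/(g r m).
elim: m r => [|m IH] r // _ hr.
case: r hr => [|s] hr; first by rewrite /g big_ord1 bin0.
have [<-|rm] := eqVneq s.+1 m.
  have -> : H s.+1 s.+2 = G s.+1 s.+2 by rewrite [LHS]/= eqxx.
  by apply: succn_inj; rewrite sizeGtop g_top.
have hs : s.+1 < m by lia.
rewrite Hs // /blockAA_0B !size_cat !size_map IH //; last by lia.
rewrite IH //; last by lia.
rewrite g_rec //=; lia.
Qed.
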